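(* Let $X$ be a paracompact Hausdorff space. Then the following are equivalent: (1) $X$ is Hurewicz; (2) $X$ is set strongly star Hurewicz; (3) $X$ is strongly star Hurewicz; (4) $X$ is set star Hurewicz; (5) $X$ is star Hurewicz.
   Context: For a subset $A$ of a space $X$ and a collection $\mathcal{U}$ of subsets of $X$, ${\rm St}(A,\mathcal{U}) = \bigcup\{U \in \mathcal{U}: U \cap A \neq \emptyset\}$. A space $X$ is Hurewicz if for each sequence $(\mathcal{U}_n: n \in \mathbb{N})$ of open covers of $X$ there are finite $\mathcal{V}_n \subset \mathcal{U}_n$ such that each $x \in X$ lies in $\bigcup\mathcal{V}_n$ for all but finitely many $n$. $X$ is star Hurewicz if for each sequence $(\mathcal{U}_n)$ of open covers of $X$ there are finite $\mathcal{V}_n \subset \mathcal{U}_n$ such that each $x\in X$ lies in ${\rm St}(\bigcup\mathcal{V}_n,\mathcal{U}_n)$ for all but finitely many $n$. $X$ is strongly star Hurewicz if for each sequence $(\mathcal{U}_n)$ of open covers of $X$ there are finite sets $F_n \subset X$ such that each $x \in X$ lies in ${\rm St}(F_n,\mathcal{U}_n)$ for all but finitely many $n$. $X$ is set star Hurewicz if for each nonempty $A \subset X$ and each sequence $(\mathcal{U}_n: n\in\mathbb{N})$ of collections of sets open in $X$ with $\overline{A} \subset \bigcup\mathcal{U}_n$ for all $n$, there are finite $\mathcal{V}_n \subset \mathcal{U}_n$ such that each $x \in A$ lies in ${\rm St}(\bigcup\mathcal{V}_n,\mathcal{U}_n)$ for all but finitely many $n$. $X$ is set strongly star Hurewicz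 if for each nonempty $A \subset X$ and each such sequence $(\mathcal{U}_n)$ there are finite sets $F_n \subset \overline{A}$ such that each $x \in A$ lies in ${\rm St}(F_n,\mathcal{U}_n)$ for all but finitely many $n$. *)

(* Defs.v *)
From mathcomp Require Import all_boot all_order.
From mathcomp Require Import all_classical all_reals all_analysis.
Set Implicit Arguments. Unset Strict Implicit. Unset Printing Implicit Defensive.
Local Open Scope classical_set_scope.

Section Defs.
Context {X : topologicalType}.

Definition open_family (U : set (set X)) := forall V, U V -> open V.
Definition covers (U : set (set X)) (B : set X) := forall x, B x -> exists2 V, U V & V x.
Definition open_cover (U : set (set X)) := open_family U /\ covers U setT.

Definition Union (U : set (set X)) : set X := [set x | exists2 V, U V & V x].

Definition St (A : set X) (U : set (set X)) : set X :=
  [set x | exists2 V, U V & V x /\ V `&` A !=set0].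

Definition eventually_nat (P : nat -> Prop) := exists N, forall n, (N <= n)%N -> P n.

Definition locally_finite (W : set (set X)) :=
  forall x : X, exists2 N, nbhs x N & finite_set [set V | W V /\ V `&` N !=set0].

Definition refines (W U : set (set X)) := forall V, W V -> exists2 V', U V' & V `<=` V'.

Definition paracompact :=
  forall U, open_cover U ->
    exists W, [/\ open_cover W, refines W U & locally_finite W].

Definition hurewicz :=
  forall U : nat -> set (set X), (forall n, open_cover (U n)) ->
    exists Vs : nat -> set (set X),
      (forall n, finite_set (Vs n) /\ Vs n `<=` U n) /\
      forall x, eventually_nat (fun n => Union (Vs n) x).

Definition star_hurewicz :=
  forall U : nat -> set (set X), (forall n, open_cover (U n)) ->
    exists Vs : nat -> set (set X),
      (forall n, finite_set (Vs n) /\ Vs n `<=` U n) /\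
      forall x, eventually_nat (fun n => St (Union (Vs n)) (U n) x).

Definition strongly_star_hurewicz :=
  forall U : nat -> set (set X), (forall n, open_cover (U n)) ->
    exists F : nat -> set X,
      (forall n, finite_set (F n)) /\
      forall x, eventually_nat (fun n => St (F n) (U n) x).

Definition set_star_hurewicz :=
  forall (A : set X) (U : nat -> set (set X)), A !=set0 ->
    (forall n, open_family (U n) /\ covers (U n) (closure A)) ->
    exists Vs : nat -> set (set X),
      (forall n, finite_set (Vs n) /\ Vs n `<=` U n) /\
      forall x, A x -> eventually_nat (fun n => St (Union (Vs n)) (U n) x).

Definition set_strongly_star_hurewicz :=
  forall (A : set X) (U : nat -> set (set X)), A !=set0 ->
    (forall n, open_family (U n) /\ covers (U n) (closure A)) ->
    exists F : nat -> set X,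
      (forall n, finite_set (F n) /\ F n `<=` closure A) /\
      forall x, A x -> eventually_nat (fun n => St (F n) (U n) x).

End Defs.
Arguments paracompact : clear implicits.
Arguments hurewicz : clear implicits.
Arguments star_hurewicz : clear implicits.
Arguments strongly_star_hurewicz : clear implicits.
Arguments set_star_hurewicz : clear implicits.
Arguments set_strongly_star_hurewicz : clear implicits.

(* Main.v *)
Require Import Defs.
From mathcomp Require Import all_boot all_order.
From mathcomp Require Import all_classical all_reals all_analysis.
Set Implicit Arguments. Unset Strict Implicit. Unset Printing Implicit Defensive.
Local Open Scope classical_set_scope.

Lemma near_finite (T : Type) (F : set_system T) (I : choiceType) (S : set I)
  (P : I -> T -> Prop) : Filter F -> finite_set S ->
  (forall i, S i -> \forall z \near F, P i z) -> \forall z \near F, forall i, S i -> P i z.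
Proof.
move=> FF /finite_fsetP [D ->] h.
apply: filterS (filter_bigI (D := D) (f := fun i => [set z | P i z]) FF _).
  move=> z Hz i Di. exact: (Hz i Di).
move=> i Di. exact: h.
Qed.


Section Easy.
Variable X : topologicalType.

Lemma pick_cover (U : nat -> set (set X)) (B : set X) :
  (forall n, covers (U n) B) ->
  exists g : nat -> X -> set X, forall n p, B p -> U n (g n p) /\ g n p p.
Proof.
move=> hU.
have h1 : forall n, exists g : X -> set X, forall p, B p -> U n (g p) /\ g p p.
  move=> n.
  have : forall p, exists V, B p -> U n V /\ V p.
    move=> p; have [Bp|nBp] := pselect (B p).
      by have [V UV Vp] := hU n p Bp; exists V.
    by exists set0.
  by move/choice => [g hg]; exists g.
have [g hg] := choice h1.
by exists g.
Qed.

Lemma St_mono (F G : set X) (U : set (set X)) : F `<=` G -> St F U `<=` St G U.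
Proof.
move=> FG x [V UV [Vx [p [Vp Fp]]]]; exists V => //; split => //.
by exists p; split => //; apply: FG.
Qed.

Lemma Union_St (Vs U : set (set X)) : Vs `<=` U -> Union Vs `<=` St (Union Vs) U.
Proof.
move=> VU x [V VV Vx]; exists V; first exact: VU.
by split => //; exists x; split => //; exists V.
Qed.

Lemma hur_ssst : hurewicz X -> set_strongly_star_hurewicz X.
Proof.
move=> hH A U [a Aa] hU.
pose W n := U n `|` [set ~` closure A].
have oW : forall n, open_cover (W n).
  move=> n; split.
    move=> V [UV|->]; first exact: (hU n).1 V UV.
    exact/closed_openC/closed_closure.
  move=> x _; have [cAx|ncAx] := pselect (closure A x).
    by have [V UV Vx] := (hU n).2 x cAx; exists V => //; left.
  by exists (~` closure A) => //; right.
have [Vs [hVs hev]] := hH W oW.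
have : forall V : set X, exists p, V `&` closure A !=set0 -> (V `&` closure A) p.
  move=> V; have [[p hp]|nV] := pselect (V `&` closure A !=set0).
    by exists p.
  by exists a.
move/choice => [f hf].
pose F n := f @` [set V | Vs n V /\ U n V /\ V `&` closure A !=set0].
exists F; split.
  move=> n; split.
    apply: finite_image; apply: sub_finite_set (hVs n).1.
    by move=> V [].
  by move=> _ [V [_ [_ hV]] <-]; exact: (hf V hV).2.
move=> x Ax; have [N hN] := hev x; exists N => n Nn.
have [V VV Vx] := hN n Nn.
have UV : U n V.
  have [//|/= eV] := (hVs n).2 V VV.
  by exfalso; move: Vx; rewrite eV; apply; exact: subset_closure.
have hV : V `&` closure A !=set0 by exists x; split => //; exact: subset_closure.
exists V => //; split => //.
exists (f V); split; first exact: (hf V hV).1.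
by exists V.
Qed.

Lemma ssst_sst : set_strongly_star_hurewicz X -> strongly_star_hurewicz X.
Proof.
move=> h U hU.
have [[a _]|nX] := pselect ((setT : set X) !=set0); last first.
  by exists (fun=> set0); split => // x; exfalso; apply: nX; exists x.
have [F [hF hev]] := h setT U (ex_intro _ a I) (fun n => conj (hU n).1 (fun x _ => (hU n).2 x I)).
exists F; split; first by move=> n; exact: (hF n).1.
by move=> x; exact: hev.
Qed.

Lemma ssst_sst2 : set_strongly_star_hurewicz X -> set_star_hurewicz X.
Proof.
move=> h A U hA hU.
have [F [hF hev]] := h A U hA hU.
have [g hg] := pick_cover (fun n => (hU n).2).
exists (fun n => g n @` F n); split.
  move=> n; split; first exact: finite_image (hF n).1.
  by move=> _ [p Fp <-]; exact: (hg n p ((hF n).2 p Fp)).1.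
move=> x Ax; have [N hN] := hev x Ax; exists N => n Nn.
apply: St_mono (hN n Nn) => p Fp.
by exists (g n p); [exists p | exact: (hg n p ((hF n).2 p Fp)).2].
Qed.

Lemma sst_st : strongly_star_hurewicz X -> star_hurewicz X.
Proof.
move=> h U hU.
have [F [hF hev]] := h U hU.
have [g hg] := pick_cover (fun n => (hU n).2).
exists (fun n => g n @` F n); split.
  move=> n; split; first exact: finite_image (hF n).
  by move=> _ [p Fp <-]; exact: (hg n p I).1.
move=> x; have [N hN] := hev x; exists N => n Nn.
apply: St_mono (hN n Nn) => p Fp.
by exists (g n p); [exists p | exact: (hg n p I).2].
Qed.

Lemma sst2_st : set_star_hurewicz X -> star_hurewicz X.
Proof.
move=> h U hU.
have [[a _]|nX] := pselect ((setT : set X) !=set0); last first.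
  exists (fun=> set0); split => [n|x]; first by split => //; exact: sub0set.
  by exfalso; apply: nX; exists x.
have [F [hF hev]] := h setT U (ex_intro _ a I) (fun n => conj (hU n).1 (fun x _ => (hU n).2 x I)).
exists F; split; first by move=> n; exact: (hF n).
by move=> x; exact: hev.
Qed.

End Easy.

Section Hard.
Variable X : topologicalType.

Lemma ncl_near (V : set X) x : ~ closure V x -> \forall z \near x, ~ closure V z.
Proof.
move=> nV; apply: open_nbhs_nbhs; split => //.
exact/closed_openC/closed_closure.
Qed.

Lemma haus_sep (hX : hausdorff_space X) (x y : X) : y <> x ->
  exists O, [/\ open O, O y & ~ closure O x].
Proof.
move=> yx.
have [A [B [nA nB AB]]] : exists A B, [/\ nbhs y A, nbhs x B & ~ (A `&` B !=set0)].
  apply: contrapT => hn; apply: yx; apply: hX => A B nA nB.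
  apply: contrapT => hAB; apply: hn; by exists A, B.
exists A°; split; [exact: open_interior | exact: nA |].
move=> /(_ B nB) [z [Az Bz]]; apply: AB; exists z; split => //.
exact: interior_subset.
Qed.

Lemma regular_pc (pc : paracompact X) (hX : hausdorff_space X) (x : X) (U : set X) :
  open U -> U x -> exists G, [/\ open G, G x & closure G `<=` U].
Proof.
move=> oU Ux.
pose C := [set U] `|` [set O : set X | open O /\ ~ closure O x].
have oC : open_cover C.
  split; first by move=> V [->|[]].
  move=> y _; have [Uy|nUy] := pselect (U y); first by exists U => //; left.
  have yx : y <> x by move=> yx; apply: nUy; rewrite yx.
  by have [Ob [oO Oy nO]] := haus_sep hX yx; exists Ob => //; right.
have [W [oW rW lW]] := pc C oC.
pose Bad := [set z : X | exists2 V, W V & V z /\ ~ closure V x].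
have nB : \forall z \near x, ~ Bad z.
  have [N Nx fN] := lW x.
  have h : \forall z \near x, forall V, [set V | W V /\ V `&` N !=set0] V ->
      ~ closure V x -> ~ V z.
    apply: near_finite => // V _.
    have [cV|nV] := pselect (closure V x).
      by apply: filterE => z; move=> /(_ cV).
    apply: filterS (ncl_near nV) => z nz _ Vz; apply: nz; exact: subset_closure.
  apply: filterS2 h Nx => z hz Nz [V WV [Vz nV]].
  apply: (hz V) => //; split => //; by exists z.
have oB : open Bad.
  rewrite openE => z [V WV [Vz nV]].
  have : nbhs z V by apply: open_nbhs_nbhs; split => //; exact: oW.1.
  by apply: filterS => w Vw; exists V.
exists (~` Bad)°; split; [exact: open_interior | exact: nB |].
have cB : closed (~` Bad) by exact: open_closedC.
move=> z /(closureS (@interior_subset _ _)); rewrite -(proj1 (closure_id _) cB) => nBz.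
apply: contrapT => nUz.
have [V WV Vz] := oW.2 z I.
have [V' CV' VV'] := rW V WV.
case: CV' => [eV'|[oO nO]].
  by apply: nUz; rewrite -eV'; exact: VV'.
apply: nBz; exists V => //; split => //.
by move=> cV; apply: nO; exact: (closureS VV').
Qed.

Lemma psr (pc : paracompact X) (hX : hausdorff_space X) (U : set (set X)) :
  open_cover U -> exists V : set (set X), open_cover V /\
    forall y, exists2 U0, U U0 & forall V', V V' -> V' y -> V' `<=` U0.
Proof.
move=> oU.
pose G := [set Gs : set X | open Gs /\ exists2 U0, U U0 & closure Gs `<=` U0].
have oG : open_cover G.
  split; first by move=> ? [].
  move=> x _; have [U0 UU0 U0x] := oU.2 x I.
  have [G' [oG' G'x cG']] := regular_pc pc hX (oU.1 _ UU0) U0x.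
  by exists G' => //; split => //; exists U0.
have [H [oH rH lH]] := pc G oG.
have : forall Hs : set X, exists V0, H Hs -> U V0 /\ closure Hs `<=` V0.
  move=> Hs; case: (pselect (H Hs)) => [HH|nH]; last by exists set0.
  have [G' [_ [U0 UU0 cU0]] HG'] := rH Hs HH.
  by exists U0 => _; split => //; apply: subset_trans (closureS HG') cU0.
move/choice => [f hf].
pose Vof (x : X) := [set z : X | (forall Hs, H Hs -> closure Hs x -> f Hs z) /\
  (forall Hs, H Hs -> closure Hs z -> closure Hs x)].
exists [set Vof x | x in setT]; split; first split.
- move=> _ [x _ <-]; rewrite openE => z [h1 h2].
  have [Nx Nxx fNx] := lH x.
  have [Nz Nzz fNz] := lH z.
  have e1 : \forall w \near z, forall Hs, [set Hs | H Hs /\ Hs `&` Nx !=set0] Hs ->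
      (closure Hs x -> f Hs w).
    apply: near_finite => // Hs [HH _].
    case: (pselect (closure Hs x)) => [cx|ncx]; last by apply: filterE.
    have : nbhs z (f Hs).
      by apply: open_nbhs_nbhs; split; [exact: oU.1 _ (hf Hs HH).1 | exact: h1].
    by apply: filterS.
  have e2 : \forall w \near z, forall Hs, [set Hs | H Hs /\ Hs `&` Nz !=set0] Hs ->
      (~ closure Hs x -> ~ closure Hs w).
    apply: near_finite => // Hs [HH _].
    case: (pselect (closure Hs x)) => [cx|ncx]; first by apply: filterE => w /(_ cx).
    have ncz : ~ closure Hs z by move/(h2 Hs HH).
    by apply: filterS (ncl_near ncz) => w.
  have e3 : \forall w \near z, nbhs w Nz := nbhs_interior Nzz.
  apply: filterS3 e1 e2 e3 => w hw1 hw2 hw3; split.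
    move=> Hs HH cx; apply: hw1 => //; split => //; exact: cx Nx Nxx.
  move=> Hs HH cw; apply: contrapT => ncx; apply: (hw2 Hs) => //; split => //.
  exact: cw Nz hw3.
- move=> x _; exists (Vof x); first by exists x.
  by split => // Hs HH cx; exact: (hf Hs HH).2 x cx.
move=> y; have [H0 HH0 H0y] := oH.2 y I.
exists (f H0); first exact: (hf H0 HH0).1.
move=> _ [x _ <-] [_ h2] z [h1' _]; apply: h1' => //.
by apply: h2 => //; exact: subset_closure.
Qed.

Lemma dsr (pc : paracompact X) (hX : hausdorff_space X) (U : set (set X)) :
  open_cover U -> exists V : set (set X), open_cover V /\
    forall W, V W -> W !=set0 -> exists2 U0, U U0 & St W V `<=` U0.
Proof.
move=> oU.
have [V1 [oV1 p1]] := psr pc hX oU.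
have [V2 [oV2 p2]] := psr pc hX oV1.
exists V2; split => // W VW [y Wy].
have [U0 UU0 hU0] := p1 y.
exists U0 => // z [V' V2V' [V'z [p [V'p Wp]]]].
have [A V1A hA] := p2 p.
apply: (hU0 A V1A (hA W VW Wp y Wy)).
exact: (hA V' V2V' V'p z V'z).
Qed.

Lemma sh_h (pc : paracompact X) (hX : hausdorff_space X) :
  star_hurewicz X -> hurewicz X.
Proof.
move=> h U oU.
have : forall n, exists V : set (set X), open_cover V /\
    forall W, V W -> W !=set0 -> exists2 U0, U n U0 & St W V `<=` U0.
  move=> n; have := dsr pc hX (oU n); apply.
move/choice => [V hV].
have [Ws [hWs hev]] := h V (fun n => (hV n).1).
have : forall n, exists g : set X -> set X, forall W, V n W -> W !=set0 ->
    U n (g W) /\ St W (V n) `<=` g W.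
  move=> n.
  have : forall W, exists U0, V n W -> W !=set0 -> U n U0 /\ St W (V n) `<=` U0.
    move=> W; case: (pselect (V n W /\ W !=set0)) => [[a b]|nb].
      by have [U0 ? ?] := (hV n).2 W a b; exists U0.
    by exists set0 => a b; exfalso; apply: nb.
  by move/choice => [g hg]; exists g.
move/choice => [g hg].
exists (fun n => g n @` [set W | Ws n W /\ W !=set0]); split.
  move=> n; split.
    by apply: finite_image; apply: sub_finite_set (hWs n).1 => W [].
  by move=> _ [W [WW ne] <-]; exact: (hg n W ((hWs n).2 W WW) ne).1.
move=> x; have [N hN] := hev x; exists N => n Nn.
have [V' VV' [V'x [p [V'p [W WW Wp]]]]] := hN n Nn.
have ne : W !=set0 by exists p.
exists (g n W); first by exists W.
apply: (hg n W ((hWs n).2 W WW) ne).2.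
by exists V' => //; split => //; exists p.
Qed.

End Hard.

Theorem theorem2p6 (X : topologicalType) :
  paracompact X -> hausdorff_space X ->
  [/\ (hurewicz X <-> set_strongly_star_hurewicz X),
      (hurewicz X <-> strongly_star_hurewicz X),
      (hurewicz X <-> set_star_hurewicz X) &
      (hurewicz X <-> star_hurewicz X)].
Proof.
move=> pc hX.
have SH := @sh_h X pc hX.
have A1 := @hur_ssst X.
have A2 := @ssst_sst X.
have A3 := @ssst_sst2 X.
have A4 := @sst_st X.
have A5 := @sst2_st X.
split; split => h.
- exact: A1.
- exact: SH (A4 (A2 h)).
- exact: A2 (A1 h).
- exact: SH (A4 h).
- exact: A3 (A1 h).
- exact: SH (A5 h).
- exact: A4 (A2 (A1 h)).
- exact: SH h.
Qed.
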